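(* Let $d\in\mathbb{N}$ and $N=2^d$. There exists a sequence of side information $a_{1:N}\in(\{0,1\}^d)^N$ such that for every probabilistic predictor $\rho$ there exists $\mathcal{S}\in\mathcal{P}_d$ such that, for the labels $x_t:=h_{\mathcal{S}}(a_t)$ ($t=1,\dots,N$), one has $\mathcal{L}_N(\rho)\ge d$.
   Context: $\mathcal{P}_d$ is the power set of $\{1,\dots,d\}$; for $\mathcal{S}\in\mathcal{P}_d$ and $a\in\{0,1\}^d$, $h_{\mathcal{S}}(a)=\bigwedge_{i\in\mathcal{S}}a^i$ (equal to $1$ if $\mathcal{S}=\emptyset$). A probabilistic predictor $\rho$ is a sequence of rules that at each time $t$, given past labels $x_{<t}$ and side information $a_{1:t}$, outputs a probability distribution $\rho_t(\cdot\mid x_{<t};a_{1:t})$ on $\{0,1\}$. Its cumulative log-loss is $\mathcal{L}_n(\rho):=-\log_2\prod_{t=1}^n\rho_t(x_t\mid x_{<t};a_{1:t})$ (possibly $+\infty$). *)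

(* Defs.v *)
From Stdlib Require Import Reals.
From mathcomp Require Import all_boot.
Set Implicit Arguments. Unset Strict Implicit. Unset Printing Implicit Defensive.

Local Open Scope R_scope.

Definition bvec (d : nat) := 'I_d -> bool.

Definition hS (d : nat) (S : {set 'I_d}) (a : bvec d) : bool :=
  [forall i, (i \in S) ==> a i].

(* A probabilistic predictor: at time t (1-based), given the past labels
   x_{<t} = [x_1;...;x_{t-1}] and side info a_{1:t} = [a_1;...;a_t],
   returns the probability it assigns to label 1 (label 0 gets 1 - that). *)
Record predictor (d : nat) := Predictor {
  rho_one : nat -> seq bool -> seq (bvec d) -> R;
  rho_one_range : forall t xs as_, 0 <= rho_one t xs as_ <= 1
}.

Definition rho_prob d (rho : predictor d) (t : nat) (xs : seq bool)
  (as_ : seq (bvec d)) (b : bool) : R :=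
  if b then rho_one rho t xs as_ else 1 - rho_one rho t xs as_.

Definition seq_prob d (rho : predictor d) (n : nat) (xs : seq bool)
  (as_ : seq (bvec d)) : R :=
  foldr (fun t acc =>
           rho_prob rho t (take t.-1 xs) (take t as_) (nth false xs t.-1) * acc)
        1 (iota 1 n).

Inductive eR := Fin of R | PInf.

Definition eR_ge (x : eR) (r : R) : Prop :=
  match x with Fin y => r <= y | PInf => True end.

Definition log2 (x : R) : R := ln x / ln 2.

Definition cum_logloss d (rho : predictor d) (n : nat) (xs : seq bool)
  (as_ : seq (bvec d)) : eR :=
  let P := seq_prob rho n xs as_ in
  if Req_EM_T P 0 then PInf else Fin (- log2 P).

(* Main.v *)
Require Import Defs.
From Stdlib Require Import Reals Lra.
From mathcomp Require Import all_boot.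

Local Open Scope R_scope.

Lemma foldr_mul_c (f : nat -> R) (c : R) (s : seq nat) :
  foldr (fun t acc => f t * acc) c s = foldr (fun t acc => f t * acc) 1 s * c.
Proof. elim: s => [|x s IH] /=; [lra| rewrite IH; ring]. Qed.

Lemma foldr_01 (f : nat -> R) (s : seq nat) :
  (forall t, 0 <= f t <= 1) ->
  0 <= foldr (fun t acc => f t * acc) 1 s <= 1.
Proof.
move=> H; elim: s => [|x s IH] /=; first lra.
have := H x => Hx; split; [apply Rmult_le_pos; [apply Hx|apply IH]|].
apply Rle_trans with (1 * 1); [apply Rmult_le_compat; lra|lra].
Qed.

Lemma foldr_half (f : nat -> R) (s : seq nat) :
  (forall t, 0 <= f t) -> (forall t, t \in s -> f t <= /2) ->
  foldr (fun t acc => f t * acc) 1 s <= (/2) ^ size s.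
Proof.
move=> H0; elim: s => [|x s IH] /= H; first lra.
have Hp : 0 <= foldr (fun t acc => f t * acc) 1 s.
  elim: (s) => [|y r IHr] /=; [lra|apply Rmult_le_pos; auto].
apply Rmult_le_compat; auto.
- by apply H; rewrite in_cons eqxx.
- by apply IH => t Ht; apply H; rewrite in_cons Ht orbT.
Qed.

Theorem mainTheorem4 (d : nat) :
  exists a : seq (bvec d), size a = (2 ^ d)%nat /\
    forall rho : predictor d, exists S : {set 'I_d},
      eR_ge (cum_logloss rho (2 ^ d) [seq hS S v | v <- a] a) (INR d).
Proof.
set A1 : seq (bvec d) := mkseq (fun k => fun i : 'I_d => nat_of_ord i != k) d.
set a := A1 ++ nseq (2 ^ d - d) (fun _ => true).
have led : (d <= 2 ^ d)%nat by apply: ltnW; apply: ltn_expl.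
have sza : size a = (2 ^ d)%nat by rewrite size_cat size_mkseq size_nseq subnKC.
exists a; split => // rho.
pose c (t : nat) (xs : seq bool) : bool :=
  if Rle_dec (rho_one rho t xs (take t a)) (/2) then true else false.
pose fix gen k : seq bool := match k with
  | 0 => [::] | k'.+1 => rcons (gen k') (c k'.+1 (gen k')) end.
have szg : forall k, size (gen k) = k.
  by elim => [|k IH] //=; rewrite size_rcons IH.
have tkg : forall m k, (k <= m)%nat -> take k (gen m) = gen k.
  elim => [|m IH] k Hk; first by move: Hk; rewrite leqn0 => /eqP ->.
  rewrite leq_eqVlt in Hk; case/orP: Hk => [/eqP ->|Hk].
    by rewrite take_oversize // szg.
  by rewrite /= -cats1 takel_cat ?szg // IH.
have nthg : forall m k, (k < m)%nat -> nth false (gen m) k = c k.+1 (gen k).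
  move=> m k Hk; rewrite -(nth_take false (ltnSn k)) (tkg m k.+1 Hk) /= nth_rcons szg ltnn eqxx //.
set S := [set i : 'I_d | ~~ nth false (gen d) i].
exists S.
set L := [seq hS S v | v <- a].
have szL : size L = (2 ^ d)%nat by rewrite size_map.
have nthL : forall k, (k < d)%nat -> nth false L k = nth false (gen d) k.
  move=> k Hk.
  rewrite (nth_map (fun _ => true)) ?sza ?(leq_trans Hk) // nth_cat size_mkseq Hk.
  rewrite nth_mkseq // /hS.
  case E: (nth false (gen d) k).
    apply/forallP => i; apply/implyP; rewrite inE => Hi.
    by apply/eqP => Hik; move: Hi; rewrite Hik E.
  apply/negbTE/forallP => /(_ (Ordinal Hk)) /implyP; rewrite inE /= E eqxx.
  by move=> /(_ isT).
have tdL : take d L = gen d.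
  have szt : size (take d L) = d by rewrite size_takel // szL.
  apply: (eq_from_nth (x0 := false)); first by rewrite szt szg.
  move=> k; rewrite szt.
  by move=> Hk; rewrite nth_take // nthL.
have fb : forall t, 0 <= rho_prob rho t (take t.-1 L) (take t a) (nth false L t.-1) <= 1.
  move=> t; have := rho_one_range rho t (take t.-1 L) (take t a).
  rewrite /rho_prob; case: (nth false L t.-1); lra.
have fh : forall t, t \in iota 1 d ->
    rho_prob rho t (take t.-1 L) (take t a) (nth false L t.-1) <= /2.
  move=> t; rewrite mem_iota; case: t => [|k] //= Hk.
  rewrite add1n ltnS in Hk.
  rewrite -(take_takel L (ltnW Hk)) tdL (tkg d k (ltnW Hk)) nthL // nthg //.
  rewrite /c /rho_prob; case: Rle_dec => H /=; lra.
have Hi : iota 1 (2 ^ d) = iota 1 d ++ iota (1 + d) (2 ^ d - d).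
  by rewrite -iotaD subnKC.
have HP : 0 <= seq_prob rho (2 ^ d) L a <= (/2) ^ d.
  rewrite /seq_prob Hi foldr_cat.
  set f := fun t => rho_prob rho t (take t.-1 L) (take t a) (nth false L t.-1).
  change (0 <= foldr (fun t acc => f t * acc) (foldr (fun t acc => f t * acc) 1 (iota (1 + d) (2 ^ d - d))) (iota 1 d) <= (/ 2) ^ d).
  rewrite foldr_mul_c.
  have h1 := foldr_01 f (iota 1 d) fb.
  have h2 := foldr_01 f (iota (1 + d) (2 ^ d - d)) fb.
  have h3 := foldr_half f (iota 1 d) (fun t => proj1 (fb t)) fh.
  rewrite size_iota in h3.
  split; [apply Rmult_le_pos; lra|].
  apply Rle_trans with ((/2) ^ d * 1); last lra.
  apply Rmult_le_compat; lra.
rewrite /cum_logloss /=.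
case: Req_EM_T => // Hne /=.
set P := seq_prob rho (2 ^ d) L a in HP Hne *.
have Pp : 0 < P by lra.
have ln2 : 0 < ln 2 by rewrite -ln_1; apply ln_increasing; lra.
have hl : ln P <= - INR d * ln 2.
  have -> : - INR d * ln 2 = ln ((/2) ^ d).
    by rewrite ln_pow ?ln_Rinv; lra.
  case: (Rle_lt_or_eq_dec _ _ (proj2 HP)) => [h|->]; last lra.
  by apply Rlt_le, ln_increasing.
rewrite /log2 /Rdiv.
have hy : ln 2 * / ln 2 = 1 by field; lra.
have yp : 0 < / ln 2 by apply Rinv_0_lt_compat.
have := Rmult_le_compat_r (/ ln 2) _ _ (Rlt_le _ _ yp) hl.
rewrite Rmult_assoc hy; lra.
Qed.
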